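(* Let $(\mathfrak D,d)$ be a finite metric space, $p\in(1,\infty)$, $\vartheta\in\mathcal P(\mathfrak D)$, $\{\mu_k\}_{k\in\mathbb{N}}\subset\mathcal P(\mathfrak D)$, and for each $k$ let $(\varphi_k,\psi_k)$ be functions on $\mathfrak D$ with $\psi_k=\varphi_k^c$, $\varphi_k=\psi_k^c$ and $W_p^p(\vartheta,\mu_k)=\int\varphi_k\,d\mu_k+\int\psi_k\,d\vartheta$. There is a constant $C_{p,\mathfrak D}>0$, depending only on $p$, $\mathfrak D$ and $d$, such that for every finite $I\subset\mathbb{N}$, \[|G_I(\mu)-G_I(\nu)|\le C_{p,\mathfrak D}W_p(\mu,\nu)\qquad\text{for all }\mu,\nu\in\mathcal P(\mathfrak D),\] where $G_I(\mu):=\max_{k\in I}\big(\int\varphi_k\,d\mu+\int\psi_k\,d\vartheta\big)$.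
   Context: $\mathcal P(\mathfrak D)$: probability measures on $\mathfrak D$; $W_p$: $p$-Wasserstein distance with cost $d^p$; $\varphi^c(x):=\inf_{y\in\mathfrak D}(d(x,y)^p-\varphi(y))$. *)

(* Defs.v *)
From HB Require Import structures.
From mathcomp Require Import all_boot all_order all_algebra.
From mathcomp Require Import all_classical all_reals all_analysis.
Set Implicit Arguments. Unset Strict Implicit. Unset Printing Implicit Defensive.
Import Order.TTheory GRing.Theory Num.Theory.
Local Open Scope ring_scope.
Local Open Scope classical_set_scope.

Section Defs.
Variables (R : realType) (T : finType).

Definition is_metric (d : T -> T -> R) : Prop :=
  (forall x y, 0 <= d x y) /\ (forall x y, d x y = 0 <-> x = y) /\
  (forall x y, d x y = d y x) /\ (forall x y z, d x z <= d x y + d y z).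

Definition is_prob (mu : T -> R) : Prop :=
  (forall x, 0 <= mu x) /\ \sum_x mu x = 1.

Definition integ (f : T -> R) (mu : T -> R) : R := \sum_x f x * mu x.

Definition is_coupling (mu nu : T -> R) (pi : T * T -> R) : Prop :=
  (forall z, 0 <= pi z) /\
  (forall x, \sum_y pi (x, y) = mu x) /\ (forall y, \sum_x pi (x, y) = nu y).

Definition Wpp (d : T -> T -> R) (p : R) (mu nu : T -> R) : R :=
  inf [set \sum_z (d z.1 z.2 `^ p) * pi z | pi in [set pi | is_coupling mu nu pi]].

Definition Wp (d : T -> T -> R) (p : R) (mu nu : T -> R) : R :=
  Wpp d p mu nu `^ p^-1.

Definition ctrans (d : T -> T -> R) (p : R) (phi : T -> R) : T -> R :=
  fun x => inf [set d x y `^ p - phi y | y in [set: T]].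

Definition G_I (I : seq nat) (phi psi : nat -> T -> R) (theta mu : T -> R) : R :=
  sup [set integ (phi k) mu + integ (psi k) theta | k in [set k | k \in I]].

End Defs.

(* Main.v *)
Require Import Defs.
From HB Require Import structures.
From mathcomp Require Import all_boot all_order all_algebra.
From mathcomp Require Import all_classical all_reals all_analysis.
From mathcomp Require Import ring lra.
Import Order.TTheory GRing.Theory Num.Theory.
Local Open Scope ring_scope.
Local Open Scope classical_set_scope.

Section Aux.
Variables (R : realType) (T : finType) (d : T -> T -> R) (p : R).

Definition D0 : R := 1 + \sum_(z : T * T) d z.1 z.2 `^ p.
Definition dl : R := \big[Order.min/1]_(z : T * T | z.1 != z.2) d z.1 z.2 `^ p.

Lemma D0_gt0 : 0 < D0.
Proof. by rewrite /D0 ltr_pwDl // sumr_ge0 // => z _; exact: powR_ge0. Qed.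

Lemma dpow_le x y : d x y `^ p <= D0.
Proof.
rewrite /D0 (bigD1 (x, y)) //= addrCA -[X in X <= _]addr0 lerD2l addr_ge0 // sumr_ge0 // => z _.
exact: powR_ge0.
Qed.

Hypothesis dpos : forall x y, x != y -> 0 < d x y.

Lemma dl_gt0 : 0 < dl.
Proof.
rewrite /dl; elim/big_ind: _ => //.
  by move=> a b ha hb; rewrite lt_min ha hb.
by move=> z hz; apply: powR_gt0; apply: dpos.
Qed.

Lemma dl_le x y : x != y -> dl <= d x y `^ p.
Proof. by move=> hxy; rewrite /dl (bigmin_le_cond _ (fun z : T * T => d z.1 z.2 `^ p) (j := (x, y))). Qed.

Lemma ctrans_lip (psi : T -> R) x y : ctrans d p psi x - ctrans d p psi y <= D0.
Proof.
rewrite lerBlDl addrC -lerBlDl.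
apply: lb_le_inf; first by exists (d y y `^ p - psi y); exists y.
move=> _ [z _ <-].
have hb : has_lbound [set d x z0 `^ p - psi z0 | z0 in [set: T]].
  exists (- \sum_z0 `|psi z0|) => _ [z0 _ <-].
  rewrite -[X in X <= _]add0r lerD ?powR_ge0 // lerN2 (le_trans (ler_norm _)) //.
  by rewrite (bigD1 z0) //= lerDl sumr_ge0.
have := ge_inf hb (ex_intro2 _ _ z I erefl : [set d x z0 `^ p - psi z0 | z0 in [set: T]] _).
move=> h; apply: (le_trans (lerB h (lexx D0))).
have := dpow_le x z; have := powR_ge0 (d y z) p; lra.
Qed.

Lemma pair_sum (F : T * T -> R) : \sum_z F z = \sum_x \sum_y F (x, y).
Proof. by rewrite pair_big /=; apply: eq_bigr => -[]. Qed.

Lemma coupling_bound (phi : T -> R) mu nu pi :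
  (forall x y, phi x - phi y <= D0) -> is_coupling mu nu pi -> is_prob mu ->
  exists m, [/\ 0 <= m, m <= 1, `|integ phi mu - integ phi nu| <= D0 * m &
     dl * m <= \sum_z d z.1 z.2 `^ p * pi z].
Proof.
move=> Hphi [pi0 [hmu hnu]] [_ mu1].
exists (\sum_z pi z * (z.1 != z.2)%:R); split.
- by apply: sumr_ge0 => z _; rewrite mulr_ge0.
- apply: (@le_trans _ _ (\sum_z pi z)).
    apply: ler_sum => z _; have := pi0 z; case: (z.1 != z.2) => /=; lra.
  rewrite pair_sum -mu1; apply: ler_sum => x _; by rewrite hmu.
- have -> : integ phi mu - integ phi nu =
      \sum_z (phi z.1 - phi z.2) * pi z.
    rewrite pair_sum /integ.
    have -> : \sum_x phi x * nu x = \sum_x \sum_y phi y * pi (x, y).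
      rewrite exchange_big /=; apply: eq_bigr => y _.
      by rewrite -hnu mulr_sumr.
    rewrite -sumrB; apply: eq_bigr => x _.
    rewrite -hmu mulr_sumr -sumrB; apply: eq_bigr => y _ /=; rewrite mulrBl.
    done.
  rewrite mulr_sumr; apply: (le_trans (ler_norm_sum _ _ _)).
  apply: ler_sum => z _; rewrite normrM (ger0_norm (pi0 z)).
  have h1 := Hphi z.1 z.2; have h2 := Hphi z.2 z.1; have h3 := pi0 z.
  have h4 : `|phi z.1 - phi z.2| <= D0 by rewrite ler_norml; apply/andP; split; lra.
  case: eqP => [e|_] /=.
    by rewrite e subrr normr0 !mul0r !mulr0.
  rewrite mulr1 mulrC; nra.
- rewrite mulr_sumr; apply: ler_sum => z _.
  have h3 := pi0 z; have h5 := powR_ge0 (d z.1 z.2) p.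
  case: eqP => [e|/eqP ne] /=.
    by rewrite mulr0 mulr0 mulr_ge0.
  by rewrite mulr1; apply: ler_wpM2r => //; apply: dl_le.
Qed.

Lemma powR_le_self a : 1 <= p -> 0 <= a <= 1 -> a `^ p <= a.
Proof.
move=> p1 /andP[a0 a1]; have [->|an0] := eqVneq a 0.
  by rewrite powR0 // gt_eqF // (lt_le_trans ltr01 p1).
by apply: ge1r_powR => //; rewrite a1 andbT lt_neqAle eq_sym an0 a0.
Qed.

Lemma integ_lip (phi : T -> R) mu nu : 1 < p ->
  (forall x y, phi x - phi y <= D0) -> is_prob mu -> is_prob nu ->
  `|integ phi mu - integ phi nu| <= D0 / dl `^ p^-1 * Wp d p mu nu.
Proof.
move=> p1 Hphi hmu hnu.
have D0p := D0_gt0; have dlp := dl_gt0.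
set Dl := `|integ phi mu - integ phi nu|.
set a := Dl / D0.
have ha0 : 0 <= a.
  by apply: divr_ge0; [exact: normr_ge0 | exact: ltW].
have hap : forall pi, is_coupling mu nu pi ->
    dl * a `^ p <= \sum_z d z.1 z.2 `^ p * pi z.
  move=> pi hpi; have [m [m0 m1 hD hS]] := @coupling_bound phi mu nu pi Hphi hpi hmu.
  have am : a <= m by rewrite /a ler_pdivrMr // mulrC.
  have a1 : a <= 1 by apply: le_trans m1.
  have := @powR_le_self a (ltW p1) (introT andP (conj ha0 a1)).
  move=> h; apply: le_trans hS; apply: ler_wpM2l; first exact: ltW.
  exact: le_trans am.
have hW : dl * a `^ p <= Wpp d p mu nu.
  apply: lb_le_inf.
    exists (\sum_z d z.1 z.2 `^ p * (mu z.1 * nu z.2)).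
    exists (fun z => mu z.1 * nu z.2) => //.
    case: hmu => mu0 mu1; case: hnu => nu0 nu1.
    split; first by move=> z; rewrite mulr_ge0.
    split.
      by move=> x /=; rewrite -mulr_sumr nu1 mulr1.
    by move=> y /=; rewrite -mulr_suml mu1 mul1r.
  by move=> _ [pi hpi <-]; exact: hap.
have q0 : 0 <= p^-1 by rewrite invr_ge0 ltW // (lt_trans ltr01 p1).
have hq : dl `^ p^-1 * a <= Wp d p mu nu.
  have -> : dl `^ p^-1 * a = (dl * a `^ p) `^ p^-1.
    rewrite powRM ?powR_ge0 ?(ltW dlp) // -powRrM mulfV ?powRr1 //.
    by rewrite gt_eqF // (lt_trans ltr01 p1).
  have h0 : 0 <= dl * a `^ p by apply: mulr_ge0; [exact: ltW | exact: powR_ge0].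
  apply: ge0_ler_powR => //; rewrite nnegrE //.
  exact: le_trans hW.
have dq : 0 < dl `^ p^-1 by apply: powR_gt0.
have -> : Dl = D0 / dl `^ p^-1 * (dl `^ p^-1 * a).
  rewrite /a; field; rewrite ?gt_eqF //.
apply: ler_wpM2l => //; rewrite divr_ge0 ?ltW //.
Qed.
End Aux.

Lemma G_le (R : realType) (I : seq nat) (a b : nat -> R) K : I != [::] ->
  (forall k, k \in I -> a k <= b k + K) ->
  sup [set a k | k in [set k | k \in I]] <= sup [set b k | k in [set k | k \in I]] + K.
Proof.
case: I => [//|k0 I0] _ hab.
apply: ge_sup; first by exists (a k0); exists k0 => //; exact: mem_head.
move=> _ [k hk <-]; apply: le_trans (hab k hk) _; rewrite lerD2r.
apply: sup_upper_bound; last by exists k.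
split; first by exists (b k0); exists k0 => //; exact: mem_head.
exists (\sum_(j <- k0 :: I0) `|b j|) => _ [j hj <-].
apply: le_trans (ler_norm _) _.
by rewrite (big_rem j hj) /= lerDl sumr_ge0.
Qed.

Theorem lemmaB5 (R : realType) (T : finType) (d : T -> T -> R) (p : R) :
  is_metric d -> 1 < p ->
  exists C : R, 0 < C /\
  forall (theta : T -> R) (mus : nat -> T -> R) (phi psi : nat -> T -> R),
    is_prob theta ->
    (forall k, is_prob (mus k)) ->
    (forall k, psi k = ctrans d p (phi k)) ->
    (forall k, phi k = ctrans d p (psi k)) ->
    (forall k, Wpp d p theta (mus k) = integ (phi k) (mus k) + integ (psi k) theta) ->
    forall (I : seq nat), I != [::] ->
    forall mu nu : T -> R, is_prob mu -> is_prob nu ->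
      `|G_I I phi psi theta mu - G_I I phi psi theta nu| <= C * Wp d p mu nu.
Proof.
move=> [d0 [d0eq _]] p1.
have dpos : forall x y, x != y -> 0 < d x y.
  move=> x y hxy; rewrite lt_neqAle d0 andbT eq_sym; apply/eqP => /d0eq e.
  by rewrite e eqxx in hxy.
exists (D0 R T d p / dl R T d p `^ p^-1); split.
  by rewrite divr_gt0 ?D0_gt0 // powR_gt0 // dl_gt0.
move=> theta mus phi psi _ _ _ hphi _ I hI mu nu hmu hnu.
have hk : forall k, `|integ (phi k) mu - integ (phi k) nu| <=
    D0 R T d p / dl R T d p `^ p^-1 * Wp d p mu nu.
  move=> k; apply: integ_lip => // x y.
  by rewrite hphi; apply: ctrans_lip.
rewrite /G_I.
set W := _ * Wp d p mu nu in hk *.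
have h1 : sup [set integ (phi k) mu + integ (psi k) theta | k in [set k | k \in I]]
   <= sup [set integ (phi k) nu + integ (psi k) theta | k in [set k | k \in I]] + W.
  apply: G_le => // k _.
  have := hk k; rewrite ler_norml => /andP[g1 g2]; lra.
have h2 : sup [set integ (phi k) nu + integ (psi k) theta | k in [set k | k \in I]]
   <= sup [set integ (phi k) mu + integ (psi k) theta | k in [set k | k \in I]] + W.
  apply: G_le => // k _.
  have := hk k; rewrite ler_norml => /andP[g1 g2]; lra.
rewrite ler_norml; apply/andP; split; lra.
Qed.
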